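(* For all mutually disjoint $K,I,J\subseteq\mathbb N_n$ put $$\beta_{K,I,J}\doteq\frac{1}{\sqrt{2^{\,n-|I\cup J|}}}\,b_K\,\mathbf c_{I,J}=\frac{1}{\sqrt{2^{\,n-|I\cup J|}}}\sum_{A\subseteq K}(-2)^{|A|}\,\mathbf n_A\,\mathbf c^*_I\mathbf c_J .$$ Then: (1) $\mathfrak B\doteq\{\beta_{K,I,J}: K,I,J\subseteq\mathbb N_n \text{ pairwise disjoint}\}$ is an orthonormal basis of $\mathcal L^2(\mathcal F)$. In fact $\langle b_K\mathbf c_{A,B},b_L\mathbf c_{C,D}\rangle_{\mathcal L^2(\mathcal F)}=\delta_{AC}\delta_{BD}\delta_{KL}\,2^{\,n-|A\cup B|}$ whenever $K,A,B$ are mutually disjoint and $L,C,D$ are mutually disjoint. (2) For every $k\in\mathbb N_0$, $\mathfrak B\cap\mathcal O_k$ is an orthonormal basis of $\mathcal O_k$. Explicitly, $$\mathfrak B\cap\mathcal O_k=\{\beta_{K,I,J}: K,I,J \text{ pairwise disjoint},\ |I|+|J|+2|K|=2l \text{ for some } 0\le l\le k\}.$$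
   Context: Let $\mathfrak h$ be a complex Hilbert space of finite dimension $n$ with a fixed orthonormal basis $\varphi_1,\dots,\varphi_n$, and let $\mathbb N_n=\{1,\dots,n\}$. Inner products are antilinear in the first argument. $\mathcal F=\bigoplus_{k=0}^n\bigwedge^k\mathfrak h$ is the fermion Fock space, with inner product $\langle f_1\wedge\cdots\wedge f_k,g_1\wedge\cdots\wedge g_l\rangle=\delta_{kl}\det(\langle f_i,g_j\rangle)_{i,j}$. Its vacuum $\Omega$ is $1\in\bigwedge^0\mathfrak h=\mathbb C$. The creation operators are $c^*(f)\omega=f\wedge\omega$, and $c(f)=c^*(f)^*$. For $A=\{a_1<\dots<a_k\}\subseteq\mathbb N_n$ put $\varphi_A=\varphi_{a_1}\wedge\cdots\wedge\varphi_{a_k}$, with $\varphi_\emptyset=\Omega$. Put - $\mathbf c^*_A=c^*(\varphi_{a_1})\cdots c^*(\varphi_{a_k})$, so that $\mathbf c^*_A\omega=\varphi_A\wedge\omega$; - $\mathbf c_A=(\mathbf c^*_A)^*=c(\varphi_{a_k})\cdots c(\varphi_{a_1})$; - $\mathbf c_{A,B}=\mathbf c^*_A\mathbf c_B$; - $\mathbf n_A=\mathbf c_{A,A}$. Empty products are the identity. For $K\subseteq\mathbb N_n$ define $b_K=\sum_{I\subseteq K}(-2)^{|I|}\mathbf n_I$. $\mathcal L^2(\mathcal F)$ is the space of all linear operators on $\mathcal F$ with inner product $\langle a,b\rangle=\operatorname{tr}(a^*b)$. For $\omega\in\mathcal F$ let $\mathbf c^*(\omega)\xi=\omega\wedge\xi$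 and $\mathbf c(\omega)=\mathbf c^*(\omega)^*$. For $k\in\mathbb N_0$, the space $\mathcal O_k$ of $k$-body operators is the complex linear span of all operators $\mathbf c^*(\omega)\mathbf c(\eta)$ with $\omega\in\bigwedge^r\mathfrak h$, $\eta\in\bigwedge^s\mathfrak h$, and $r+s=2l$ for some $0\le l\le k$. *)

(* Defs.v *)
(* Concrete model of the fermion Fock space over h = C^n. *)
From HB Require Import structures.
From mathcomp Require Import all_boot all_order all_algebra.
Set Implicit Arguments. Unset Strict Implicit. Unset Printing Implicit Defensive.
Import Order.TTheory GRing.Theory Num.Theory.
Local Open Scope ring_scope.

Section Fock.
Variables (C : numClosedFieldType) (n : nat).

(* Index type of the orthonormal basis phi_A (A subset of N_n = 'I_n) of F. *)
Definition FIdx := {set 'I_n}.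
Definition fdim := #|{: FIdx}|.

(* vectors of F : coordinates in the basis (phi_A)_A ; operators on F : matrices *)
Definition FVec := 'cV[C]_fdim.
Definition FOp := 'M[C]_fdim.

Definition coord (v : FVec) (A : FIdx) : C := v (enum_rank A) 0.

(* phi_A ; phi_set0 is the vacuum Omega *)
Definition phi (A : FIdx) : FVec := \col_i (i == enum_rank A)%:R.

(* sign of phi_A /\ phi_B = sgn * phi_(A u B), for disjoint A, B:
   (-1)^(number of pairs (a,b) in A x B with b < a) *)
Definition wsign (A B : FIdx) : C :=
  (-1) ^+ #|[set p : 'I_n * 'I_n | (p.1 \in A) && (p.2 \in B) && (p.2 < p.1)%N]|.

Definition wedge (w x : FVec) : FVec :=
  \col_i \sum_(A : FIdx) \sum_(B : FIdx)
     (if (A :&: B == set0) && (A :|: B == enum_val i)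
      then wsign A B * coord w A * coord x B else 0).

(* omega lies in the r-th exterior power *)
Definition homog (r : nat) (w : FVec) : Prop :=
  forall A : FIdx, #|A| != r -> coord w A = 0.

(* adjoint w.r.t. the inner product in which (phi_A) is orthonormal *)
Definition adj (M : FOp) : FOp := (map_mx (fun z : C => z^*) M)^T.

(* bold c^*(omega) xi = omega /\ xi ; bold c(omega) = its adjoint *)
Definition cstarF (w : FVec) : FOp := \matrix_(i, j) wedge w (phi (enum_val j)) i 0.
Definition cF (w : FVec) : FOp := adj (cstarF w).

(* one-particle vector phi_a of h, seen in /\^1 h *)
Definition phi1 (a : 'I_n) : FVec := phi [set a].

(* c^*_A = c^*(phi_a1) ... c^*(phi_ak), a1 < ... < ak *)
Definition cstarA (A : FIdx) : FOp := \prod_(a <- enum A) cstarF (phi1 a).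
Definition cA (A : FIdx) : FOp := adj (cstarA A).
Definition cAB (A B : FIdx) : FOp := cstarA A *m cA B.
Definition nA (A : FIdx) : FOp := cAB A A.

Definition bK (K : FIdx) : FOp := \sum_(I : FIdx | I \subset K) ((-2) ^+ #|I|) *: nA I.

Definition hs (a b : FOp) : C := \tr (adj a *m b).

Definition disj3 (K I J : FIdx) : bool :=
  [&& [disjoint K & I], [disjoint K & J] & [disjoint I & J]].

Definition beta (K I J : FIdx) : FOp :=
  (sqrtC ((2 : C) ^+ (n - #|I :|: J|)))^-1 *: (bK K *m cAB I J).

Definition inO (k : nat) (X : FOp) : Prop :=
  exists (m : nat) (a : 'I_m -> C) (r s : 'I_m -> nat) (w e : 'I_m -> FVec),
    (forall i, exists l, (l <= k)%N /\ (r i + s i = 2 * l)%N) /\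
    (forall i, homog (r i) (w i) /\ homog (s i) (e i)) /\
    X = \sum_(i < m) a i *: (cstarF (w i) *m cF (e i)).
End Fock.

(* Main.v *)
Require Import Defs.
From HB Require Import structures.
From mathcomp Require Import all_boot all_order all_algebra.
From mathcomp Require Import ring zify.
Import Order.TTheory GRing.Theory Num.Theory.
Set Implicit Arguments. Unset Strict Implicit. Unset Printing Implicit Defensive.
Local Open Scope ring_scope.

Section Basics.
Variables (C : numClosedFieldType) (n : nat).
Local Notation FIdx := (FIdx n).
Local Notation FOp := (FOp C n).
Local Notation FVec := (FVec C n).
Local Notation fdim := (fdim n).

Definition ev (i : 'I_fdim) : FIdx := enum_val i.

Lemma sum_ev (F : FIdx -> C) : \sum_(i < fdim) F (ev i) = \sum_S F S.
Proof.
symmetry; rewrite (reindex ev) //; apply: onW_bij; apply: enum_val_bij.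
Qed.

Lemma coord_phi (X A : FIdx) : Defs.coord (phi C X) A = (A == X)%:R.
Proof. by rewrite /Defs.coord /phi mxE (inj_eq enum_rank_inj). Qed.

Definition mop (f : FIdx -> FIdx) (g : FIdx -> C) : FOp :=
  \matrix_(i, j) ((ev i == f (ev j))%:R * g (ev j)).

Lemma mopE f g i j : mop f g i j = ((ev i == f (ev j))%:R * g (ev j)).
Proof. by rewrite mxE. Qed.

Lemma mop_comp f1 g1 f2 g2 :
  mop f1 g1 *m mop f2 g2 = mop (fun S => f1 (f2 S)) (fun S => g1 (f2 S) * g2 S).
Proof.
apply/matrixP => i j; rewrite !mxE.
rewrite (eq_bigr (fun k => (ev i == f1 (ev k))%:R * g1 (ev k) *
   ((ev k == f2 (ev j))%:R * g2 (ev j)))); last by move=> k _; rewrite !mxE.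
rewrite (sum_ev (fun T => (ev i == f1 T)%:R * g1 T * ((T == f2 (ev j))%:R * g2 (ev j)))).
rewrite (bigD1 (f2 (ev j))) //= eqxx big1 ?addr0; first by rewrite mul1r mulrA.
by move=> T /negbTE ->; rewrite mul0r mulr0.
Qed.

Lemma mop_ext f g f' g' : (forall S, g S = g' S) ->
  (forall S, g S != 0 -> f S = f' S) -> mop f g = mop f' g'.
Proof.
move=> Hg Hf; apply/matrixP => i j; rewrite !mxE -Hg.
by have [->|/Hf ->] := eqVneq (g (ev j)) 0; rewrite ?mulr0.
Qed.

Lemma mop1 : mop id (fun _ => 1) = 1%:M.
Proof.
apply/matrixP => i j; rewrite !mxE mulr1.
by rewrite (inj_eq (bij_inj (@enum_val_bij _))).
Qed.

Lemma mop_scale c f g : c *: mop f g = mop f (fun S => c * g S).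
Proof. by apply/matrixP => i j; rewrite !mxE mulrCA. Qed.

Lemma mop_sum (I : finType) (P : pred I) (c : I -> C) f (g : I -> FIdx -> C) :
  \sum_(x | P x) c x *: mop f (g x) = mop f (fun S => \sum_(x | P x) c x * g x S).
Proof.
apply/matrixP => i j; rewrite !mxE summxE mulr_sumr; apply: eq_bigr => x _.
by rewrite !mxE mulrCA.
Qed.

Definition adj' (M : FOp) := adj M.

Lemma hs_mop f1 g1 f2 g2 :
  hs (mop f1 g1) (mop f2 g2) = \sum_S (f1 S == f2 S)%:R * (g1 S)^* * g2 S.
Proof.
rewrite /hs /mxtrace -(sum_ev (fun S => (f1 S == f2 S)%:R * (g1 S)^* * g2 S)).
apply: eq_bigr => i _; rewrite !mxE.
rewrite (eq_bigr (fun k => ((ev k == f1 (ev i))%:R * g1 (ev i))^* *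
   ((ev k == f2 (ev i))%:R * g2 (ev i)))); last by move=> k _; rewrite !mxE.
rewrite (sum_ev (fun T => ((T == f1 (ev i))%:R * g1 (ev i))^* * ((T == f2 (ev i))%:R * g2 (ev i)))).
rewrite (bigD1 (f1 (ev i))) //= eqxx big1 ?addr0.
  by rewrite rmorphM /= conjC1 mul1r mulrA [_^* * _]mulrC.
by move=> T /negbTE ->; rewrite mul0r conjC0 mul0r.
Qed.


Lemma eqsetF (A B : FIdx) : (A == B) = [forall x, (x \in A) == (x \in B)].
Proof. by apply/eqP/forallP => [-> x|H]; [rewrite eqxx|apply/setP => x; exact/eqP/H]. Qed.

Lemma subsetF (A B : FIdx) : (A \subset B) = [forall x, (x \in A) ==> (x \in B)].
Proof. by apply/subsetP/forallP => H x; [apply/implyP/H|move/implyP: (H x)]. Qed.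

Lemma disjF (A B : FIdx) : [disjoint A & B] = [forall x, ~~ ((x \in A) && (x \in B))].
Proof.
rewrite -setI_eq0 eqsetF; apply: eq_forallb => x; rewrite !inE.
by case: (x \in A); case: (x \in B).
Qed.

Lemma forall_andb (P Q : pred 'I_n) :
  [forall x, P x] && [forall x, Q x] = [forall x, P x && Q x].
Proof.
apply/andP/forallP => [[/forallP H1 /forallP H2] x|H]; first by rewrite H1 H2.
by split; apply/forallP => x; case/andP: (H x).
Qed.

Lemma disj0s (S : FIdx) : [disjoint set0 & S].
Proof. by rewrite disjF; apply/forallP => x; rewrite inE. Qed.

Lemma disjUl (A1 A2 S : FIdx) :
  [disjoint A1 :|: A2 & S] = [disjoint A1 & S] && [disjoint A2 & S].
Proof.
rewrite !disjF forall_andb; apply: eq_forallb => x; rewrite !inE.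
by case: (x \in A1); case: (x \in A2); case: (x \in S).
Qed.

Lemma disjUr (A S1 S2 : FIdx) :
  [disjoint A & S1 :|: S2] = [disjoint A & S1] && [disjoint A & S2].
Proof.
rewrite !disjF forall_andb; apply: eq_forallb => x; rewrite !inE.
by case: (x \in A); case: (x \in S1); case: (x \in S2).
Qed.

Definition cnt (A B : FIdx) :=
  #|[set p : 'I_n * 'I_n | (p.1 \in A) && (p.2 \in B) && (p.2 < p.1)%N]|.

Lemma wsignE (A B : FIdx) : wsign C A B = (-1) ^+ cnt A B.
Proof. by []. Qed.

Lemma cntUl (A1 A2 B : FIdx) : [disjoint A1 & A2] -> cnt (A1 :|: A2) B = (cnt A1 B + cnt A2 B)%N.
Proof.
rewrite disjF => /forallP H; rewrite /cnt -cardsUI.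
have -> : [set p : 'I_n * 'I_n | (p.1 \in A1) && (p.2 \in B) && (p.2 < p.1)%N] :&:
          [set p : 'I_n * 'I_n | (p.1 \in A2) && (p.2 \in B) && (p.2 < p.1)%N] = set0.
  apply/setP => p; rewrite !inE; move: (H p.1).
  by case: (p.1 \in A1); case: (p.1 \in A2); rewrite ?andbF.
rewrite cards0 addn0; apply: eq_card => p; rewrite !inE.
by case: (p.1 \in A1); case: (p.1 \in A2); case: (p.2 \in B); case: (p.2 < p.1)%N.
Qed.

Lemma cntUr (A B1 B2 : FIdx) : [disjoint B1 & B2] -> cnt A (B1 :|: B2) = (cnt A B1 + cnt A B2)%N.
Proof.
rewrite disjF => /forallP H; rewrite /cnt -cardsUI.
have -> : [set p : 'I_n * 'I_n | (p.1 \in A) && (p.2 \in B1) && (p.2 < p.1)%N] :&: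
          [set p : 'I_n * 'I_n | (p.1 \in A) && (p.2 \in B2) && (p.2 < p.1)%N] = set0.
  apply/setP => p; rewrite !inE; move: (H p.2).
  by case: (p.2 \in B1); case: (p.2 \in B2); rewrite ?andbF.
rewrite cards0 addn0; apply: eq_card => p; rewrite !inE.
by case: (p.1 \in A); case: (p.2 \in B1); case: (p.2 \in B2); case: (p.2 < p.1)%N.
Qed.

Lemma wsignUl (A1 A2 B : FIdx) : [disjoint A1 & A2] ->
  wsign C (A1 :|: A2) B = wsign C A1 B * wsign C A2 B.
Proof. by move=> H; rewrite !wsignE cntUl // exprD. Qed.

Lemma wsignUr (A B1 B2 : FIdx) : [disjoint B1 & B2] ->
  wsign C A (B1 :|: B2) = wsign C A B1 * wsign C A B2.
Proof. by move=> H; rewrite !wsignE cntUr // exprD. Qed.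

Lemma wsign_sq (A B : FIdx) : wsign C A B * wsign C A B = 1.
Proof. by rewrite wsignE -exprD -signr_odd oddD addbb. Qed.

Lemma conj_wsign (A B : FIdx) : (wsign C A B)^* = wsign C A B.
Proof. by rewrite wsignE rmorphXn /= conjCN1. Qed.

Lemma wsign0l (B : FIdx) : wsign C set0 B = 1.
Proof.
rewrite wsignE /cnt (_ : [set p | _] = set0) ?cards0 //.
by apply/setP => p; rewrite !inE.
Qed.

Lemma wsign0r (A : FIdx) : wsign C A set0 = 1.
Proof.
rewrite wsignE /cnt (_ : [set p | _] = set0) ?cards0 //.
by apply/setP => p; rewrite !inE andbF.
Qed.

Lemma wsign1_lt (a : 'I_n) (B : FIdx) : (forall b, b \in B -> (a < b)%N) -> wsign C [set a] B = 1.
Proof.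
move=> H; rewrite wsignE /cnt (_ : [set p | _] = set0) ?cards0 //.
apply/setP => [[x y]]; rewrite !inE /=.
case: (x =P a) => [->|] //=; case Hy: (y \in B) => //=.
by rewrite ltnNge ltnW // H.
Qed.


Lemma cstarF_E w i j : cstarF w i j =
  \sum_(A : FIdx) (if (A :&: ev j == set0) && (A :|: ev j == ev i)
          then wsign C A (ev j) * Defs.coord w A else 0).
Proof.
rewrite /cstarF /wedge !mxE; apply: eq_bigr => A _.
rewrite (bigD1 (ev j)) //= big1 ?addr0.
  by rewrite /ev coord_phi eqxx mulr1.
by move=> B HB; rewrite coord_phi (negbTE HB) mulr0; case: ifP.
Qed.

Definition gstar (X S : FIdx) : C := if [disjoint X & S] then wsign C X S else 0.

Lemma cstarF_phi X : cstarF (phi C X) = mop (fun S => X :|: S) (gstar X).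
Proof.
apply/matrixP => i j; rewrite cstarF_E mopE (bigD1 X) //= big1 ?addr0.
  rewrite coord_phi eqxx mulr1 /gstar -setI_eq0 [ev i == _]eq_sym.
  by case: (X :&: ev j == set0); case: (X :|: ev j == ev i); rewrite ?mulr0 ?mul0r ?mul1r.
by move=> A HA; rewrite coord_phi (negbTE HA) mulr0; case: ifP.
Qed.

Lemma cstarF_lin w : cstarF w = \sum_(A : FIdx) Defs.coord w A *: cstarF (phi C A).
Proof.
apply/matrixP => i j; rewrite cstarF_E summxE; apply: eq_bigr => A _.
rewrite mxE cstarF_E (bigD1 A) //= big1 ?addr0.
  rewrite coord_phi eqxx mulr1; case: ifP; rewrite ?mulr0 // => _; exact: mulrC.
by move=> B HB; rewrite coord_phi (negbTE HB) mulr0; case: ifP.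
Qed.

Lemma prod_cstar (s : seq 'I_n) : sorted (relpre val ltn) s ->
  \prod_(a <- s) cstarF (phi C [set a]) = mop (fun S => [set x in s] :|: S) (gstar [set x in s]).
Proof.
elim: s => [_|a s IH Hs].
  rewrite big_nil -[1]/(1%:M) -(mop1); apply: mop_ext => S.
    by rewrite /gstar (_ : [set x in [::]] = set0) ?disj0s ?wsign0l //; apply/setP => x; rewrite !inE.
  by move=> _ /=; rewrite (_ : [set x in [::]] = set0) ?set0U //; apply/setP => x; rewrite !inE.
have Hall : all (fun b : 'I_n => (a < b)%N) s.
  move: Hs => /=; rewrite path_sortedE; first by case/andP.
  by move=> x y z /=; exact: ltn_trans.
rewrite big_cons IH; last by move: Hs => /= /path_sorted.
rewrite cstarF_phi -mulmxE mop_comp.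
have Ha : [set x in a :: s] = [set a] :|: [set x in s].
  by apply/setP => x; rewrite !inE.
have Han : a \notin [set x in s].
  rewrite inE; apply/negP => /(allP Hall); by rewrite ltnn.
apply: mop_ext => S; last by move=> _; rewrite Ha setUA.
rewrite Ha /gstar.
have Hd : [disjoint [set a] & [set x in s]] by rewrite disjoints1.
rewrite disjUl disjUr wsignUl //.
case HXS: ([disjoint [set x in s] & S]); last by rewrite !andbF ?mulr0.
rewrite wsignUr //.
case: ([disjoint [set a] & S]); rewrite ?andbF ?andbT ?mul0r //= ?Hd.
rewrite (@wsign1_lt a [set x in s]) ?mul1r //.
by move=> b; rewrite inE => /(allP Hall).
Qed.


Lemma sorted_enum (A : FIdx) : sorted (relpre val ltn) (enum A).
Proof.
rewrite /enum_mem -enumT; apply: sorted_filter.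
  by move=> x y z /=; exact: ltn_trans.
by rewrite -sorted_map val_enum_ord; exact: iota_ltn_sorted.
Qed.

Lemma cstarA_phi (A : FIdx) : cstarA C A = cstarF (phi C A).
Proof.
rewrite /cstarA /phi1 prod_cstar ?sorted_enum // cstarF_phi.
by rewrite (_ : [set x in enum A] = A) //; apply/setP => x; rewrite !inE mem_enum.
Qed.


Definition gc (B S : FIdx) : C := if B \subset S then wsign C B (S :\: B) else 0.

Lemma key_adj (B S T : FIdx) :
  (S == B :|: T) && [disjoint B & T] = (T == S :\: B) && (B \subset S).
Proof.
rewrite !eqsetF disjF subsetF !forall_andb; apply: eq_forallb => x; rewrite !inE.
by case: (x \in S); case: (x \in B); case: (x \in T).
Qed.

Lemma adj_cstarF_phi (B : FIdx) : adj (cstarF (phi C B)) = mop (fun S => S :\: B) (gc B).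
Proof.
apply/matrixP => i j; rewrite cstarF_phi !mxE /gstar /gc.
have := key_adj B (ev j) (ev i).
case: (ev j =P B :|: ev i) => [HS|HS]; case: (ev i =P ev j :\: B) => [HT|HT];
  case Hd: [disjoint B & ev i]; case Hs: (B \subset ev j) => //= _;
  rewrite ?mul0r ?mul1r ?conjC0 ?rmorphM ?conjC1 ?mul1r ?conj_wsign ?HT //.
Qed.


Definition fAB (A B S : FIdx) : FIdx := A :|: (S :\: B).
Definition gAB (A B S : FIdx) : C := gstar A (S :\: B) * gc B S.

Lemma cAB_mop (A B : FIdx) : cAB C A B = mop (fAB A B) (gAB A B).
Proof. by rewrite /cAB /cA !cstarA_phi adj_cstarF_phi cstarF_phi mop_comp. Qed.

Lemma cAB_F (A B : FIdx) : cAB C A B = cstarF (phi C A) *m cF (phi C B).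
Proof. by rewrite /cAB /cA /cF !cstarA_phi. Qed.

Lemma nA_mop (I : FIdx) : nA C I = mop id (fun S => (I \subset S)%:R).
Proof.
rewrite /nA cAB_mop; apply: mop_ext => S.
  rewrite /gAB /gstar /gc.
  have -> : [disjoint I & S :\: I].
    by rewrite disjF; apply/forallP => x; rewrite !inE; case: (x \in I).
  by case: (I \subset S); rewrite ?wsign_sq ?mulr0.
rewrite /gAB /gc; case HIS: (I \subset S); rewrite ?mulr0 ?eqxx // => _.
apply/setP => x; rewrite /fAB !inE; move/subsetP: HIS => /(_ x).
by case: (x \in I) => //= ->.
Qed.

Lemma comb_sign (K S : FIdx) :
  \sum_(I : FIdx | I \subset K) (-2) ^+ #|I| * (I \subset S)%:R = (-1) ^+ #|K :&: S| :> C.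
Proof.
pose F := fun i : 'I_n => if i \in K :&: S then (-2 : C) else 0.
have -> : (-1) ^+ #|K :&: S| = \prod_(i : 'I_n) (F i + 1) :> C.
  rewrite -prodr_const big_mkcond /=; apply: eq_bigr => i _; rewrite /F.
  by case: (i \in K :&: S); rewrite ?add0r //; ring.
rewrite bigA_distr big_mkcond /=; apply: eq_big => // J _.
rewrite -[RHS](big_mkcond (fun i => i \in J)) /=.
case HJ: (J \subset K :&: S).
  move: (HJ); rewrite subsetI => /andP[-> ->]; rewrite mulr1 -prodr_const.
  by apply: eq_bigr => i Hi; rewrite /F (subsetP HJ).
have [i Hi HiKS] : exists2 i, i \in J & i \notin K :&: S.
  by apply/subsetPn; rewrite HJ.
rewrite (bigD1 i) //= /F (negbTE HiKS) mul0r.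
by move: HJ; rewrite subsetI; case: (J \subset K); case: (J \subset S); rewrite ?mulr0.
Qed.

Lemma bK_mop (K : FIdx) : bK C K = mop id (fun S => (-1) ^+ #|K :&: S|).
Proof.
rewrite /bK; under eq_bigr => I _ do rewrite nA_mop.
by rewrite mop_sum; apply: mop_ext => // S; rewrite comb_sign.
Qed.


Definition G (K A B S : FIdx) : C := (-1) ^+ #|K :&: fAB A B S| * gAB A B S.

Lemma bKc_mop (K A B : FIdx) : bK C K *m cAB C A B = mop (fAB A B) (G K A B).
Proof. by rewrite bK_mop cAB_mop mop_comp. Qed.

Definition condAB (A B S : FIdx) := [disjoint A & S :\: B] && (B \subset S).

Lemma gAB_E (A B S : FIdx) : gAB A B S =
  if condAB A B S then wsign C A (S :\: B) * wsign C B (S :\: B) else 0.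
Proof.
rewrite /gAB /gstar /gc /condAB.
by case: [disjoint A & S :\: B]; case: (B \subset S); rewrite ?mulr0 ?mul0r.
Qed.

Lemma conj_sign (k : nat) : ((-1) ^+ k : C)^* = (-1) ^+ k.
Proof. by rewrite rmorphXn /= conjCN1. Qed.

Lemma conj_G K A B S : (G K A B S)^* = G K A B S.
Proof.
rewrite /G gAB_E rmorphM /= conj_sign; case: condAB; last by rewrite conjC0.
by rewrite rmorphM /= !conj_wsign.
Qed.

Lemma G_sq K A B S : G K A B S * G K A B S = (condAB A B S)%:R.
Proof.
rewrite /G gAB_E; case: condAB; last by rewrite !mulr0.
rewrite mulrACA -exprD -signr_odd oddD addbb expr0 mul1r.
by rewrite mulrACA !wsign_sq mulr1.
Qed.

Lemma hs_bKc K I J L A B :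
  hs (bK C K *m cAB C I J) (bK C L *m cAB C A B) =
  \sum_S (fAB I J S == fAB A B S)%:R * G K I J S * G L A B S.
Proof.
rewrite !bKc_mop hs_mop; apply: eq_bigr => S _; by rewrite conj_G.
Qed.

Lemma disjx (A B : FIdx) x : [disjoint A & B] -> ~~ ((x \in A) && (x \in B)).
Proof. by rewrite disjF => /forallP. Qed.
Lemma subx (A B : FIdx) x : A \subset B -> (x \in A) ==> (x \in B).
Proof. by rewrite subsetF => /forallP. Qed.

Lemma vanish1 K I J L A B S : disj3 K I J ->
  (fAB I J S == fAB A B S)%:R * G K I J S * G L A B S != 0 ->
  I = A :\: B /\ J = B :\: A.
Proof.
case/and3P => _ _ HIJ.
case HE: (fAB I J S == fAB A B S); last by rewrite !mul0r eqxx.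
rewrite /G !gAB_E.
case H1: (condAB I J S); last by rewrite !(mulr0, mul0r) eqxx.
case H2: (condAB A B S); last by rewrite !(mulr0, mul0r) eqxx.
move=> _; move/eqP: HE; move: H1 H2; rewrite /condAB /fAB => /andP[D1 S1] /andP[D2 S2] HE.
split; apply/setP => x; move: (disjx x D1) (subx x S1) (disjx x D2) (subx x S2) (disjx x HIJ);
  move/setP: HE => /(_ x); rewrite !inE;
  by case: (x \in I); case: (x \in J); case: (x \in A); case: (x \in B); case: (x \in S).
Qed.


Definition tog (x : 'I_n) (S : FIdx) : FIdx := [set y | (y \in S) (+) (y == x)].

Lemma togK x : involutive (tog x).
Proof. by move=> S; apply/setP => y; rewrite !inE addbK. Qed.

Lemma tog_inj x : injective (tog x).
Proof. exact: inv_inj (togK x). Qed.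

Lemma fAB_tog (A B : FIdx) x S : x \notin A -> x \notin B ->
  fAB A B (tog x S) = tog x (fAB A B S).
Proof.
move=> HA HB; apply/setP => y; rewrite /fAB !inE.
case: (y =P x) => [->|_]; last by rewrite !addbF.
by rewrite (negbTE HA) (negbTE HB) /= !addbT.
Qed.

Lemma condAB_tog (A B : FIdx) x S : x \notin A -> x \notin B ->
  condAB A B (tog x S) = condAB A B S.
Proof.
move=> HA HB; rewrite /condAB !disjF !subsetF !forall_andb; apply: eq_forallb => y.
rewrite !inE; case: (y =P x) => [->|_]; last by rewrite !addbF.
by rewrite (negbTE HA) (negbTE HB).
Qed.

Lemma wsign_tog (A R : FIdx) x : wsign C A (tog x R) = wsign C A R * wsign C A [set x].
Proof.
case Hx: (x \in R).
  have HR : R = tog x R :|: [set x].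
    by apply/setP => y; rewrite !inE; case: (y =P x) => [->|]; rewrite ?Hx ?addbF ?orbF.
  have Hd : [disjoint tog x R & [set x]].
    by rewrite disjoint_sym disjoints1 !inE eqxx Hx.
  by rewrite {2}HR wsignUr // -mulrA wsign_sq mulr1.
have -> : tog x R = R :|: [set x].
  by apply/setP => y; rewrite !inE; case: (y =P x) => [->|]; rewrite ?Hx ?addbF ?addbT ?orbF ?orbT.
by rewrite wsignUr // disjoint_sym disjoints1 Hx.
Qed.

Lemma tog_setD (S B : FIdx) x : x \notin B -> tog x S :\: B = tog x (S :\: B).
Proof.
move=> HB; apply/setP => y; rewrite !inE; case: (y =P x) => [->|_]; last by rewrite !addbF.
by rewrite (negbTE HB).
Qed.

Lemma gAB_tog (A B : FIdx) x S : x \notin A -> x \notin B ->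
  gAB A B (tog x S) = gAB A B S * (wsign C A [set x] * wsign C B [set x]).
Proof.
move=> HA HB; rewrite !gAB_E condAB_tog //; case: condAB; last by rewrite mul0r.
by rewrite tog_setD // !wsign_tog mulrACA.
Qed.

Lemma sign_tog (K T : FIdx) x :
  (-1) ^+ #|K :&: tog x T| = (-1) ^+ #|K :&: T| * (if x \in K then -1 else 1) :> C.
Proof.
case HK: (x \in K); last first.
  rewrite mulr1; congr (_ ^+ _); apply: eq_card => y; rewrite !inE.
  by case: (y =P x) => [->|_]; rewrite ?HK ?addbF.
have -> : K :&: tog x T = tog x (K :&: T).
  apply/setP => y; rewrite !inE; case: (y =P x) => [->|_]; rewrite ?HK ?addbF //.
case Hx: (x \in K :&: T).
  rewrite (cardsD1 x (K :&: T)) Hx.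
  have -> : tog x (K :&: T) = (K :&: T) :\ x.
    apply/setP => y; rewrite !inE; case: (y =P x) => [->|_]; rewrite ?addbF ?addbT //.
    by move: Hx; rewrite !inE => ->.
  by rewrite /= exprS; ring.
have -> : tog x (K :&: T) = x |: (K :&: T).
  by apply/setP => y; rewrite !inE; case: (y =P x) => [->|_]; rewrite ?addbF ?addbT ?orbF //; move: Hx; rewrite !inE => ->.
by rewrite cardsU1 Hx /= exprS; ring.
Qed.


Lemma setDI_split (A B : FIdx) : A = (A :\: B) :|: (A :&: B).
Proof. by apply/setP => y; rewrite !inE; case: (y \in A); case: (y \in B). Qed.

Lemma disjDI (A B : FIdx) : [disjoint A :\: B & A :&: B].
Proof. by rewrite disjF; apply/forallP => y; rewrite !inE; case: (y \in A); case: (y \in B). Qed.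

Definition term (K I J L A B S : FIdx) :=
  (fAB I J S == fAB A B S)%:R * G K I J S * G L A B S.

Lemma term_tog (K L A B : FIdx) x (S : FIdx) : x \notin A :|: B -> (x \in K) != (x \in L) ->
  term K (A :\: B) (B :\: A) L A B (tog x S) = - term K (A :\: B) (B :\: A) L A B S.
Proof.
rewrite inE negb_or => /andP[HA HB] HKL.
have HI : x \notin A :\: B by rewrite inE (negbTE HA) andbF.
have HJ : x \notin B :\: A by rewrite inE (negbTE HB) andbF.
rewrite /term /G !fAB_tog // !gAB_tog // (inj_eq (@tog_inj x)) !sign_tog.
case E: (fAB (A :\: B) (B :\: A) S == fAB A B S); last by rewrite !mul0r oppr0.
move/eqP: E => E; rewrite E.
have Hw : wsign C (A :\: B) [set x] * wsign C (B :\: A) [set x] *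
          (wsign C A [set x] * wsign C B [set x]) = 1.
  have HwA : wsign C A [set x] = wsign C (A :\: B) [set x] * wsign C (A :&: B) [set x].
    by rewrite {1}(setDI_split A B) wsignUl // disjDI.
  have HwB : wsign C B [set x] = wsign C (B :\: A) [set x] * wsign C (A :&: B) [set x].
    by rewrite {1}(setDI_split B A) wsignUl ?disjDI // setIC.
  rewrite HwA HwB.
  set a := wsign C (A :\: B) _; set b := wsign C (B :\: A) _; set c := wsign C (A :&: B) _.
  have -> : a * b * (a * c * (b * c)) = (a * a) * (b * b) * (c * c) by ring.
  by rewrite /a /b /c !wsign_sq !mulr1.
have He : (if x \in K then -1 else 1) * (if x \in L then -1 else 1) = -1 :> C.
  by move: HKL; case: (x \in K); case: (x \in L) => //= _; rewrite ?mulr1 ?mul1r.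
set a := wsign C (A :\: B) [set x]; set b := wsign C (B :\: A) [set x];
set c := wsign C A [set x]; set d := wsign C B [set x].
set eK := (if x \in K then -1 else 1); set eL := (if x \in L then -1 else 1).
move: Hw He; rewrite -/a -/b -/c -/d -/eK -/eL => Hw He.
set u := (-1) ^+ _; set v := (-1) ^+ _; set g1 := gAB _ _ S; set g2 := gAB A B S.
transitivity (true%:R * (u * g1) * (v * g2) * (eK * eL) * (a * b * (c * d))).
  by ring.
by rewrite Hw He; ring.
Qed.

Lemma vanish2 (K L A B : FIdx) x : x \notin A :|: B -> (x \in K) != (x \in L) ->
  \sum_S term K (A :\: B) (B :\: A) L A B S = 0.
Proof.
move=> Hx HKL; set s := \sum_S _.
have : s = - s.
  rewrite {1}/s (reindex_inj (@tog_inj x)) /= -sumrN.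
  by apply: eq_bigr => S _; rewrite term_tog.
move/eqP; rewrite -addr_eq0 -mulr2n mulrn_eq0 /= => /eqP //.
Qed.


Lemma count_cond (A B : FIdx) : [disjoint A & B] ->
  #|[set S : FIdx | condAB A B S]| = (2 ^ (n - #|A :|: B|))%N.
Proof.
move=> HAB.
have -> : [set S : FIdx | condAB A B S] = (fun T => T :|: B) @: powerset (~: (A :|: B)).
  apply/setP => S; rewrite inE; apply/idP/imsetP.
    case/andP => D1 S1; exists (S :\: B).
      rewrite powersetE subsetF; apply/forallP => y; move: (disjx y D1) (subx y S1).
      by rewrite !inE; case: (y \in A); case: (y \in B); case: (y \in S).
    apply/setP => y; move: (subx y S1); rewrite !inE.
    by case: (y \in B); case: (y \in S).
  case=> T; rewrite powersetE => HT ->; rewrite /condAB disjF subsetF forall_andb.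
  apply/forallP => y; move: (subx y HT) (disjx y HAB); rewrite !inE.
  by case: (y \in A); case: (y \in B); case: (y \in T).
rewrite card_in_imset; last first.
  move=> T1 T2; rewrite !powersetE => H1 H2 HE; apply/setP => y.
  move: (subx y H1) (subx y H2); move/setP: HE => /(_ y); rewrite !inE.
  by case: (y \in A); case: (y \in B); case: (y \in T1); case: (y \in T2).
rewrite card_powerset; congr (2 ^ _)%N.
have := cardsC (A :|: B); rewrite card_ord => HC.
move: HC; set a := #|A :|: B|; set b := #|~: _|; move=> HC.
by rewrite -HC addKn.
Qed.

Lemma hs_self (K A B : FIdx) : disj3 K A B ->
  hs (bK C K *m cAB C A B) (bK C K *m cAB C A B) = 2 ^+ (n - #|A :|: B|).
Proof.
case/and3P => _ _ HAB; rewrite hs_bKc.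
under eq_bigr => S _ do rewrite eqxx -mulrA G_sq (_ : true%:R = 1 :> C) // mul1r.
rewrite (eq_bigr (fun S => if condAB A B S then 1 else 0)); last by move=> S _; case: condAB.
rewrite -big_mkcond /= sumr_const -natrX -(count_cond HAB); congr (_%:R).
by apply: eq_card => S; rewrite inE.
Qed.

Lemma sum_neq0 (F : FIdx -> C) : \sum_S F S != 0 -> exists S, F S != 0.
Proof.
move=> H; apply/existsP; move: H; apply: contraR; rewrite negb_exists => /forallP H.
by rewrite big1 // => S _; apply/eqP; move: (H S); rewrite negbK.
Qed.

Lemma vanish (K I J L A B : FIdx) : disj3 K I J ->
  hs (bK C K *m cAB C I J) (bK C L *m cAB C A B) != 0 ->
  [/\ I = A :\: B, J = B :\: A & forall x, x \notin A :|: B -> (x \in K) = (x \in L)].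
Proof.
move=> H3; rewrite hs_bKc => Hs.
have [S HS] := sum_neq0 Hs.
have [HI HJ] := vanish1 H3 HS.
split => // x Hx; apply/eqP; apply: contraNT Hs => HKL.
by rewrite HI HJ; apply/eqP; exact: (vanish2 Hx HKL).
Qed.


Lemma setD_disj (A B : FIdx) : [disjoint A & B] -> A :\: B = A.
Proof.
move=> H; apply/setP => y; move: (disjx y H); rewrite !inE.
by case: (y \in A); case: (y \in B).
Qed.

Lemma part1a (K A B L C' D : FIdx) : disj3 K A B -> disj3 L C' D ->
  hs (bK C K *m cAB C A B) (bK C L *m cAB C C' D)
    = ((A == C') && (B == D) && (K == L))%:R * (2 : C) ^+ (n - #|A :|: B|).
Proof.
move=> H1 H2; case E: ((A == C') && (B == D) && (K == L)).
  case/andP: E => /andP[/eqP <- /eqP <-] /eqP <-.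
  by rewrite hs_self // (_ : true%:R = 1 :> C) // mul1r.
rewrite mul0r; apply/eqP; apply: contraFT E => Hs.
have [HI HJ Hx] := vanish H1 Hs.
move: (H1) (H2) => /and3P[K1 K2 K3] /and3P[L1 L2 L3].
have EA : A = C' by rewrite HI setD_disj.
have EB : B = D by rewrite HJ setD_disj // disjoint_sym.
rewrite EA EB !eqxx /=; apply/eqP/setP => x.
case Hx': (x \in C' :|: D); last by apply: Hx; rewrite Hx'.
move: (disjx x K1) (disjx x K2) (disjx x L1) (disjx x L2) Hx'.
rewrite EA EB !inE.
by case: (x \in K); case: (x \in L); case: (x \in C'); case: (x \in D).
Qed.


Lemma adjD (a b : FOp) : adj (a + b) = adj a + adj b.
Proof. by apply/matrixP => i j; rewrite !mxE rmorphD. Qed.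
Lemma adjZ c (a : FOp) : adj (c *: a) = c^* *: adj a.
Proof. by apply/matrixP => i j; rewrite !mxE rmorphM. Qed.
Lemma adj0 : adj (0 : FOp) = 0.
Proof. by apply/matrixP => i j; rewrite !mxE conjC0. Qed.

Lemma hsDl (a b c : FOp) : hs (a + b) c = hs a c + hs b c.
Proof. by rewrite /hs adjD mulmxDl mxtraceD. Qed.
Lemma hsDr (a b c : FOp) : hs a (b + c) = hs a b + hs a c.
Proof. by rewrite /hs mulmxDr mxtraceD. Qed.
Lemma hsZl k (a b : FOp) : hs (k *: a) b = k^* * hs a b.
Proof. by rewrite /hs adjZ -scalemxAl mxtraceZ. Qed.
Lemma hsZr k (a b : FOp) : hs a (k *: b) = k * hs a b.
Proof. by rewrite /hs -scalemxAr mxtraceZ. Qed.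
Lemma hs0l (b : FOp) : hs 0 b = 0.
Proof. by rewrite /hs adj0 mul0mx mxtrace0. Qed.
Lemma hs0r (b : FOp) : hs b 0 = 0.
Proof. by rewrite /hs mulmx0 mxtrace0. Qed.

Lemma hs_sumZr (I : Type) (r : seq I) (P : pred I) (k : I -> C) (F : I -> FOp) a :
  hs a (\sum_(i <- r | P i) k i *: F i) = \sum_(i <- r | P i) k i * hs a (F i).
Proof.
elim: r => [|x r IH]; first by rewrite !big_nil hs0r.
by rewrite !big_cons; case: (P x); rewrite ?hsDr ?hsZr IH.
Qed.

Lemma hs_sumZl (I : Type) (r : seq I) (P : pred I) (k : I -> C) (F : I -> FOp) a :
  hs (\sum_(i <- r | P i) k i *: F i) a = \sum_(i <- r | P i) (k i)^* * hs (F i) a.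
Proof.
elim: r => [|x r IH]; first by rewrite !big_nil hs0l.
by rewrite !big_cons; case: (P x); rewrite ?hsDl ?hsZl IH.
Qed.

Lemma hs_pos (Y : FOp) : hs Y Y = 0 -> Y = 0.
Proof.
rewrite /hs /mxtrace => H; apply/matrixP => i j; rewrite mxE.
have H2 : \sum_j0 \sum_k `|Y k j0| ^+ 2 = 0.
  rewrite -[RHS]H; apply: eq_bigr => j0 _; rewrite !mxE; apply: eq_bigr => k _.
  by rewrite !mxE normCK mulrC.
have /eqP := H2; rewrite psumr_eq0 => [/allP/(_ j)|j0 _]; last first.
  by apply: sumr_ge0 => k _; apply: exprn_ge0.
rewrite mem_index_enum => /(_ isT); rewrite psumr_eq0 => [/allP/(_ i)|k _]; last exact: exprn_ge0.
by rewrite mem_index_enum => /(_ isT); rewrite sqrf_eq0 normr_eq0 => /eqP.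
Qed.

Definition sc (I J : FIdx) : C := (sqrtC ((2 : C) ^+ (n - #|I :|: J|)))^-1.

Lemma sc_real I J : (sc I J)^* = sc I J.
Proof. by apply: geC0_conj; rewrite invr_ge0 sqrtC_ge0 exprn_ge0 // ler0n. Qed.

Lemma sc_sq I J : sc I J * sc I J * (2 : C) ^+ (n - #|I :|: J|) = 1.
Proof.
rewrite /sc -invrM ?unitfE ?sqrtC_eq0 ?expf_neq0 ?pnatr_eq0 //.
by rewrite -expr2 sqrtCK mulVf // expf_neq0 // pnatr_eq0.
Qed.

Lemma sc_neq0 I J : sc I J != 0.
Proof. by rewrite /sc invr_eq0 sqrtC_eq0 expf_neq0 // pnatr_eq0. Qed.

Lemma betaE K I J : beta C K I J = sc I J *: (bK C K *m cAB C I J).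
Proof. by []. Qed.

Lemma part1b (K I J L I' J' : FIdx) : disj3 K I J -> disj3 L I' J' ->
  hs (beta C K I J) (beta C L I' J') = ((K, I, J) == (L, I', J'))%:R.
Proof.
move=> H1 H2; rewrite !betaE hsZl hsZr part1a // sc_real.
case E: ((I == I') && (J == J') && (K == L)).
  case/andP: E => /andP[/eqP <- /eqP <-] /eqP <-; rewrite !eqxx /=.
  by rewrite (_ : true%:R = 1 :> C) // mul1r mulrA sc_sq.
have -> : ((K, I, J) == (L, I', J')) = false.
  by apply/negbTE; apply: contraFN E => /eqP [-> -> ->]; rewrite !eqxx.
by rewrite (_ : false%:R = 0 :> C) // !mul0r !mulr0.
Qed.


Local Notation T3 := (FIdx * FIdx * FIdx)%type.
Definition Pd (t : T3) := disj3 t.1.1 t.1.2 t.2.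
Definition bt (t : T3) : FOp := beta C t.1.1 t.1.2 t.2.

Lemma hs_bt (u t : T3) : Pd u -> Pd t -> hs (bt u) (bt t) = (u == t)%:R.
Proof.
case: u => [[K I] J]; case: t => [[L I'] J'] /= H1 H2; exact: part1b.
Qed.

Definition lT : seq T3 := enum [pred t : T3 | Pd t].

Lemma card_Pd : (4 ^ n <= #|[pred t : T3 | Pd t]|)%N.
Proof.
pose h := fun f : {ffun 'I_n -> 'I_4} =>
  ([set x | val (f x) == 1%N], [set x | val (f x) == 2%N], [set x | val (f x) == 3%N]) : T3.
have key : forall a b : 'I_4, (val a == 1%N) = (val b == 1%N) ->
    (val a == 2%N) = (val b == 2%N) -> (val a == 3%N) = (val b == 3%N) -> a = b.
  case=> [[|[|[|[|a]]]] Ha]; case=> [[|[|[|[|b]]]] Hb] //= _ _ _; apply: val_inj => //.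
have hinj : injective h.
  move=> f g [E1 E2 E3]; apply/ffunP => x; apply: key.
  - by move/setP: E1 => /(_ x); rewrite !inE.
  - by move/setP: E2 => /(_ x); rewrite !inE.
  - by move/setP: E3 => /(_ x); rewrite !inE.
have -> : (4 ^ n = #|h @: [set: {ffun 'I_n -> 'I_4}]|)%N.
  by rewrite card_imset // cardsT card_ffun !card_ord.
rewrite -(cardsE [pred t : T3 | Pd t]); apply: subset_leq_card.
apply/subsetP => t /imsetP [f _ ->]; rewrite !inE /Pd /disj3 /=.
by rewrite !disjF; apply/and3P; split; apply/forallP => x; rewrite !inE;
  case: (val (f x)) => [|[|[|[|?]]]].
Qed.

Lemma card_FIdx : #|{: FIdx}| = (2 ^ n)%N.
Proof. by rewrite -cardsT -powersetT card_powerset cardsT card_ord. Qed.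

Lemma span_full : (span (map bt lT) = fullv :> {vspace FOp})%VS.
Proof.
set s := map bt lT.
have Hfree : free s.
  suff : free (in_tuple s) by [].
  apply/freeP => k Hk i.
  have := congr1 (hs s`_i) Hk; rewrite hs_sumZr hs0r.
  have Hs : forall j : 'I_(size s), s`_j = bt (nth (set0, set0, set0) lT j).
    by move=> j; rewrite (nth_map (set0, set0, set0)) // -(size_map bt).
  have HP : forall j : 'I_(size s), Pd (nth (set0, set0, set0) lT j).
    move=> j; have : nth (set0, set0, set0) lT j \in lT.
      by apply: mem_nth; rewrite -(size_map bt).
    by rewrite mem_enum.
  rewrite (bigD1 i) //= big1 ?addr0.
    by rewrite !Hs hs_bt // eqxx mulr1.
  move=> j Hji; rewrite !Hs hs_bt //.
  rewrite nth_uniq ?enum_uniq -?(size_map bt) //.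
  by rewrite (_ : (i == j :> nat) = false) ?mulr0 //; apply/negbTE; rewrite eq_sym; exact: Hji.
apply/eqP; rewrite eqEdim subvf /=; move/eqP: Hfree => ->.
rewrite dimvf dim_matrix /s size_map /lT -cardE.
apply: leq_trans card_Pd; rewrite /fdim card_FIdx.
by rewrite -[(_ * _)%R]/(muln _ _) -expnMn.

Qed.


Lemma hsN (a b : FOp) : hs a (- b) = - hs a b.
Proof. by rewrite -scaleN1r hsZr mulN1r. Qed.

Lemma expansion (X : FOp) :
  X = \sum_(t : T3 | disj3 t.1.1 t.1.2 t.2) hs (bt t) X *: beta C t.1.1 t.1.2 t.2.
Proof.
set Y := X - \sum_(t : T3 | disj3 t.1.1 t.1.2 t.2) hs (bt t) X *: beta C t.1.1 t.1.2 t.2.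
have Horth : forall u, Pd u -> hs (bt u) Y = 0.
  move=> u Hu; rewrite /Y hsDr hsN hs_sumZr (bigD1 u) //= big1 ?addr0.
    by rewrite -/(bt u) hs_bt // eqxx mulr1 subrr.
  move=> t /andP[Ht Htu]; rewrite -/(bt t) hs_bt //.
  by rewrite eq_sym (negbTE Htu) mulr0.
have HY : Y \in span (in_tuple (map bt lT)) by rewrite /= span_full memvf.
have := coord_span HY => HYe.
suff : Y = 0 by move/eqP; rewrite subr_eq0 => /eqP.
apply: hs_pos; rewrite {1}HYe hs_sumZl big1 // => i _.
rewrite (_ : (in_tuple (map bt lT))`_i = bt (nth (set0, set0, set0) lT i)).
  rewrite Horth ?mulr0 //.
  have : nth (set0, set0, set0) lT i \in lT.
    by apply: mem_nth; rewrite -(size_map bt).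
  by rewrite mem_enum.
by rewrite /= (nth_map (set0, set0, set0)) // -(size_map bt).
Qed.


Lemma bK0 : bK C (set0 : FIdx) = 1%:M.
Proof.
rewrite bK_mop -mop1; apply: mop_ext => // S.
by rewrite set0I cards0.
Qed.

Lemma keyL (K I J A B : FIdx) : disj3 K I J ->
  hs (bK C K *m cAB C I J) (cAB C A B) != 0 ->
  (#|I| + #|J| + 2 * #|K| + 2 * (#|A :&: B| - #|K|) = #|A| + #|B|)%N /\
  (#|K| <= #|A :&: B|)%N.
Proof.
move=> H3 Hs; have Hs' : hs (bK C K *m cAB C I J) (bK C set0 *m cAB C A B) != 0.
  by rewrite bK0 mul1mx.
have [HI HJ Hx] := vanish H3 Hs'.
have HK : K \subset A :&: B.
  apply/subsetP => x HxK; case/and3P: H3 => D1 D2 _.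
  move: (disjx x D1) (disjx x D2); rewrite HI HJ !inE HxK /=.
  case HA: (x \in A); case HB: (x \in B) => //= _ _.
  by move: (Hx x); rewrite !inE HA HB HxK => /(_ isT).
have Hc := subset_leq_card HK.
split => //.
have E1 := cardsID B A; have E2 := cardsID A B.
rewrite HI HJ; rewrite setIC in E2; lia.
Qed.

Lemma sum_neq0T (T : finType) (F : T -> C) : \sum_t F t != 0 -> exists t, F t != 0.
Proof.
move=> H; apply/existsP; move: H; apply: contraR; rewrite negb_exists => /forallP H.
by rewrite big1 // => S _; apply/eqP; move: (H S); rewrite negbK.
Qed.

Lemma hs_sumr (I : finType) (F : I -> FOp) a : hs a (\sum_i F i) = \sum_i hs a (F i).
Proof.
elim: (index_enum I) => [|x r IH]; first by rewrite !big_nil hs0r.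
by rewrite !big_cons hsDr IH.
Qed.

Lemma adj_sumZ (k : FIdx -> C) (F : FIdx -> FOp) :
  adj (\sum_B k B *: F B) = \sum_B (k B)^* *: adj (F B).
Proof.
elim: (index_enum _) => [|x r IH]; first by rewrite !big_nil adj0.
by rewrite !big_cons adjD adjZ IH.
Qed.

Lemma hs_expand Z (w e : FVec) : hs Z (cstarF w *m cF e) =
  \sum_A \sum_B Defs.coord w A * (Defs.coord e B)^* * hs Z (cstarF (phi C A) *m cF (phi C B)).
Proof.
rewrite {1}(cstarF_lin w) /cF (cstarF_lin e) adj_sumZ mulmx_suml hs_sumr.
apply: eq_bigr => A _; rewrite -scalemxAl hsZr mulmx_sumr hs_sumr mulr_sumr.
apply: eq_bigr => B _; rewrite -scalemxAr hsZr.
by rewrite mulrA.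
Qed.

Lemma homog_neq0 r (w : FVec) A : homog r w -> Defs.coord w A != 0 -> #|A| = r.
Proof. by move=> H; apply: contraNeq => /H ->. Qed.

Lemma deg_bound (K I J : FIdx) k (w e : FVec) r s : disj3 K I J -> homog r w -> homog s e ->
  (exists l, (l <= k)%N /\ (r + s = 2 * l)%N) ->
  hs (beta C K I J) (cstarF w *m cF e) != 0 ->
  exists l, (l <= k)%N /\ (#|I| + #|J| + 2 * #|K| = 2 * l)%N.
Proof.
move=> H3 Hw He [l [Hl Hrs]]; rewrite hs_expand => /sum_neq0T [A] /sum_neq0T [B] H.
have HwA : Defs.coord w A != 0 by apply: contraNneq H => ->; rewrite !mul0r.
have HeB : Defs.coord e B != 0.
  by apply: contraNneq H => ->; rewrite conjC0 mulr0 mul0r.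
have Hh : hs (bK C K *m cAB C I J) (cAB C A B) != 0.
  apply: contraNneq H; rewrite [cAB C A B]cAB_F => Hz.
  by rewrite betaE hsZl Hz !mulr0.
have [E Hc] := keyL H3 Hh.
have rA := homog_neq0 Hw HwA; have sB := homog_neq0 He HeB.
exists (l - (#|A :&: B| - #|K|))%N; split; first lia.
lia.
Qed.

Lemma inO_deg (K I J : FIdx) k (X : FOp) : disj3 K I J -> inO k X ->
  hs (beta C K I J) X != 0 ->
  exists l, (l <= k)%N /\ (#|I| + #|J| + 2 * #|K| = 2 * l)%N.
Proof.
move=> H3 [m [a [r [s [w [e [Hrs [Hh ->]]]]]]]].
rewrite hs_sumZr => /sum_neq0T [i Hi].
have Hi' : hs (beta C K I J) (cstarF (w i) *m cF (e i)) != 0.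
  by apply: contraNneq Hi => ->; rewrite mulr0.
have [Hw He] := Hh i.
exact: deg_bound H3 Hw He (Hrs i) Hi'.
Qed.


Lemma inO0 k : inO k (0 : FOp).
Proof.
exists 0%N, (fun _ => 0), (fun _ => 0%N), (fun _ => 0%N), (fun _ => 0), (fun _ => 0).
by split; [case|split; [case|rewrite big_ord0]].
Qed.

Lemma inOZ k c (X : FOp) : inO k X -> inO k (c *: X).
Proof.
case=> [m [a [r [s [w [e [H1 [H2 ->]]]]]]]].
exists m, (fun i => c * a i), r, s, w, e; do 2!split => //.
by rewrite scaler_sumr; apply: eq_bigr => i _; rewrite scalerA.
Qed.

Definition sel (T : Type) m1 m2 (f : 'I_m1 -> T) (g : 'I_m2 -> T) (i : 'I_(m1 + m2)) : T :=
  match split i with inl j => f j | inr j => g j end.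

Lemma sel_l T m1 m2 f g (j : 'I_m1) : @sel T m1 m2 f g (lshift m2 j) = f j.
Proof. by rewrite /sel -[lshift m2 j]/(unsplit (inl j)) unsplitK. Qed.
Lemma sel_r T m1 m2 f g (j : 'I_m2) : @sel T m1 m2 f g (rshift m1 j) = g j.
Proof. by rewrite /sel -[rshift m1 j]/(unsplit (inr j)) unsplitK. Qed.

Lemma sel_all T m1 m2 f g (P : T -> Prop) : (forall i, P (f i)) -> (forall i, P (g i)) ->
  forall i, P (@sel T m1 m2 f g i).
Proof. by move=> Hf Hg i; rewrite /sel; case: (split i). Qed.

Lemma inOD k (X Y : FOp) : inO k X -> inO k Y -> inO k (X + Y).
Proof.
case=> [m1 [a1 [r1 [s1 [w1 [e1 [H1 [H2 ->]]]]]]]].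
case=> [m2 [a2 [r2 [s2 [w2 [e2 [G1 [G2 ->]]]]]]]].
exists (m1 + m2)%N, (sel a1 a2), (sel r1 r2), (sel s1 s2), (sel w1 w2), (sel e1 e2).
split.
  move=> i; rewrite /sel; case: (split i) => j; [exact: H1|exact: G1].
split.
  move=> i; rewrite /sel; case: (split i) => j; [exact: H2|exact: G2].
rewrite big_split_ord /=; congr (_ + _); apply: eq_bigr => i _.
  by rewrite !sel_l.
by rewrite !sel_r.
Qed.

Lemma inO_sum k (P : pred FIdx) (c : FIdx -> C) (F : FIdx -> FOp) :
  (forall M, P M -> inO k (F M)) -> inO k (\sum_(M | P M) c M *: F M).
Proof.
move=> H; elim: (index_enum _) => [|x r IH]; first by rewrite big_nil; exact: inO0.
rewrite big_cons; case HP: (P x) => //.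
by apply: inOD => //; apply: inOZ; apply: H.
Qed.

Lemma homog_phi (A : FIdx) : homog #|A| (phi C A).
Proof.
move=> A' HA'; rewrite coord_phi.
by have -> : (A' == A) = false by apply: contraNF HA' => /eqP ->.
Qed.

Lemma inO_base k (A B : FIdx) : (exists l, (l <= k)%N /\ (#|A| + #|B| = 2 * l)%N) ->
  inO k (cAB C A B).
Proof.
move=> Hl; exists 1%N, (fun _ => 1), (fun _ => #|A|), (fun _ => #|B|),
  (fun _ => phi C A), (fun _ => phi C B).
split => // ; split; first by move=> _; split; apply: homog_phi.
by rewrite big_ord1 scale1r cAB_F.
Qed.

Lemma cond_nA (M I J S : FIdx) : [disjoint M & I] -> [disjoint M & J] -> [disjoint I & J] ->
  (M \subset fAB I J S) && condAB I J S = condAB (M :|: I) (M :|: J) S.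
Proof.
move=> D1 D2 D3; rewrite /condAB /fAB !disjF !subsetF !forall_andb; apply: eq_forallb => x.
move: (disjx x D1) (disjx x D2) (disjx x D3); rewrite !inE.
by case: (x \in M); case: (x \in I); case: (x \in J); case: (x \in S).
Qed.

Lemma nA_cAB (M I J : FIdx) : [disjoint M & I] -> [disjoint M & J] -> [disjoint I & J] ->
  nA C M *m cAB C I J = (wsign C J M * wsign C I M) *: cAB C (M :|: I) (M :|: J).
Proof.
move=> D1 D2 D3; rewrite nA_mop !cAB_mop mop_comp mop_scale.
have Hc := fun S => @cond_nA M I J S D1 D2 D3.
apply: mop_ext => S.
  rewrite !gAB_E -(Hc S); case HM: (M \subset fAB I J S) => /=; last first.
    by rewrite mul0r; case: condAB; rewrite ?mulr0.
  case Hcd: (condAB I J S); rewrite ?mulr0 // mul1r.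
  have HMS : M \subset S.
    have := Hc S; rewrite HM Hcd => /esym; rewrite /condAB => /andP[_].
    by rewrite subsetF => /forallP H; apply/subsetP => x Hx; move: (H x); rewrite !inE Hx.
  have E : S :\: J = (S :\: (M :|: J)) :|: M.
    apply/setP => x; move: (disjx x D2) (subx x HMS); rewrite !inE.
    by case: (x \in M); case: (x \in J); case: (x \in S).
  have Dd : [disjoint S :\: (M :|: J) & M].
    by rewrite disjF; apply/forallP => x; rewrite !inE; case: (x \in M); rewrite ?andbF.
  rewrite E !wsignUr // !wsignUl //.
  set a := wsign C I _; set b := wsign C I M; set c := wsign C J _; set d := wsign C J M.
  set u := wsign C M _.
  transitivity (a * b * (c * d) * (u * u)); last by ring.
  by rewrite wsign_sq mulr1.
rewrite /= mulf_eq0 negb_or => /andP[HM _].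
case HMS: (M \subset fAB I J S) HM; last by rewrite (_ : false%:R = 0 :> C) // eqxx.
move=> _.
apply/setP => x; move: (disjx x D1) (disjx x D2) (subx x HMS); rewrite /fAB !inE.
by case: (x \in M); case: (x \in I); case: (x \in J); case: (x \in S).
Qed.

Lemma beta_inO k (K I J : FIdx) : disj3 K I J ->
  (exists l, (l <= k)%N /\ (#|I| + #|J| + 2 * #|K| = 2 * l)%N) -> inO k (beta C K I J).
Proof.
case/and3P => D1 D2 D3 [l [Hl Hd]].
rewrite betaE; apply: inOZ; rewrite /bK mulmx_suml.
have -> : \sum_(M : FIdx | M \subset K) ((-2) ^+ #|M| *: nA C M) *m cAB C I J =
  \sum_(M : FIdx | M \subset K) ((-2) ^+ #|M| * (wsign C J M * wsign C I M)) *: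
       cAB C (M :|: I) (M :|: J).
  apply: eq_bigr => M HM; rewrite -scalemxAl nA_cAB ?scalerA //.
    by apply: disjointWl HM D1.
  by apply: disjointWl HM D2.
apply: inO_sum => M HM; apply: inO_base.
have HMI : [disjoint M & I] by apply: disjointWl HM D1.
have HMJ : [disjoint M & J] by apply: disjointWl HM D2.
have c1 := cardsUI M I; have c2 := cardsUI M J.
rewrite (disjoint_setI0 HMI) (disjoint_setI0 HMJ) cards0 in c1 c2.
have := subset_leq_card HM => HMK.
exists (l - (#|K| - #|M|))%N; split; lia.
Qed.

End Basics.

Theorem mainTheorem1 (C : numClosedFieldType) (n : nat) :
  (* (1a) the inner product formula *)
  (forall K A B L C' D : FIdx n,
     disj3 K A B -> disj3 L C' D ->
     hs (bK C K *m cAB C A B) (bK C L *m cAB C C' D)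
       = ((A == C') && (B == D) && (K == L))%:R * (2 : C) ^+ (n - #|A :|: B|)) /\
  (* (1b) B is orthonormal in L^2(F) *)
  (forall K I J L I' J' : FIdx n,
     disj3 K I J -> disj3 L I' J' ->
     hs (beta C K I J) (beta C L I' J') = ((K, I, J) == (L, I', J'))%:R) /\
  (* (1c) B spans L^2(F) *)
  (forall X : FOp C n,
     exists coef : FIdx n * FIdx n * FIdx n -> C,
       X = \sum_(t : FIdx n * FIdx n * FIdx n | disj3 t.1.1 t.1.2 t.2)
             coef t *: beta C t.1.1 t.1.2 t.2) /\
  (* (2) for every k, B n O_k is an orthonormal basis of O_k, explicitly described *)
  (forall k : nat,
     (forall X : FOp C n,
        ((exists K I J : FIdx n, disj3 K I J /\ X = beta C K I J) /\ inO k X)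
        <-> (exists K I J : FIdx n,
               [/\ disj3 K I J,
                   (exists l, (l <= k)%N /\ (#|I| + #|J| + 2 * #|K| = 2 * l)%N)
                 & X = beta C K I J])) /\
     (forall X : FOp C n, inO k X ->
        exists coef : FIdx n * FIdx n * FIdx n -> C,
          (forall t : FIdx n * FIdx n * FIdx n,
             disj3 t.1.1 t.1.2 t.2 -> coef t != 0 -> inO k (beta C t.1.1 t.1.2 t.2)) /\
          X = \sum_(t : FIdx n * FIdx n * FIdx n | disj3 t.1.1 t.1.2 t.2)
                coef t *: beta C t.1.1 t.1.2 t.2)).
Proof.
split; [|split; [|split]].
- move=> K A B L C' D H1 H2; exact: part1a.
- move=> K I J L I' J' H1 H2; exact: part1b.
- move=> X; exists (fun t => hs (@bt C n t) X); exact: expansion.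
- move=> k; split.
  + move=> X; split.
    * case=> [[K [I [J [H3 ->]]]] HO]; exists K, I, J; split => //.
      apply: inO_deg (H3) HO _; rewrite part1b // (_ : ((K, I, J) == (K, I, J)) = true); first exact: oner_neq0.
      exact/eqP.
    * case=> K [I [J [H3 Hl ->]]]; split; [by exists K, I, J|exact: beta_inO].
  + move=> X HX; exists (fun t => hs (@bt C n t) X); split; last exact: expansion.
    move=> t Ht Hc; apply: beta_inO => //; exact: inO_deg Ht HX Hc.
Qed.
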